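(* Let $x,y\in\mathbb{R}$ with $x^2+y^2=1$, let $0<\alpha\le1/2$, and let $x_0,y_0\in\mathbb{R}$ satisfy $|x-x_0|\le\alpha$ and $|y-y_0|\le\alpha$. Then $$|\phi(x,y)-\phi(x_0,y_0)|_{2\pi}\le\arcsin(\alpha)+\arcsin\Bigl(\frac{\alpha}{1-\alpha}\Bigr).$$
   Context: For $(u,v)\neq(0,0)$, $\phi(u,v)$ denotes the polar angle of the point $(u,v)$ (i.e. $u=r\cos\phi$, $v=r\sin\phi$ with $r>0$), defined modulo $2\pi$. For angles $a,b$, $|a-b|_{2\pi}=\min\bigl((a-b)\bmod 2\pi,\,(b-a)\bmod 2\pi\bigr)$. *)

(* Defs.v *)
From Stdlib Require Import Reals Lra.
Open Scope R_scope.

(* t is a polar angle of (u,v): u = r cos t, v = r sin t for some r > 0.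
   (Polar angles are defined modulo 2*PI; we work with all representatives.) *)
Definition is_polar_angle (u v t : R) : Prop :=
  exists r : R, 0 < r /\ u = r * cos t /\ v = r * sin t.

(* a mod 2*PI, taking values in [0, 2*PI); Int_part is the floor function. *)
Definition mod2pi (a : R) : R :=
  a - 2 * PI * IZR (Int_part (a / (2 * PI))).

Definition dist2pi (a b : R) : R :=
  Rmin (mod2pi (a - b)) (mod2pi (b - a)).

(* Main.v *)
Require Import Defs.
From Stdlib Require Import Reals Lra Lia Psatz ZArith.
Open Scope R_scope.

Lemma cos_perZ (x : R) (k : Z) : cos (x - 2 * PI * IZR k) = cos x.
Proof.
  destruct (Z_le_gt_dec 0 k) as [H|H].
  - rewrite <- (Z2Nat.id k H), <- INR_IZR_INZ.
    set (n := Z.to_nat k).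
    rewrite <- (cos_period (x - 2 * PI * INR n) n). f_equal. ring.
  - assert (Hk : k = (- Z.of_nat (Z.to_nat (- k)))%Z) by lia.
    rewrite Hk, opp_IZR, <- INR_IZR_INZ.
    rewrite <- (cos_period x (Z.to_nat (-k))). f_equal. ring.
Qed.

Lemma mod2pi_spec (a : R) : exists k : Z,
  mod2pi a = a - 2 * PI * IZR k /\ 0 <= mod2pi a < 2 * PI.
Proof.
  exists (Int_part (a / (2 * PI))). split; [reflexivity|].
  unfold mod2pi. pose proof PI_RGT_0.
  destruct (base_Int_part (a / (2 * PI))) as [H1 H2].
  set (z := IZR (Int_part (a / (2 * PI)))) in *.
  assert (Ha : a = 2 * PI * (a / (2 * PI))) by (field; lra).
  split; nra.
Qed.

Lemma dist_le (a b B : R) : 0 <= B <= PI -> cos B <= cos (a - b) ->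
  dist2pi a b <= B.
Proof.
  intros HB Hc. unfold dist2pi. pose proof PI_RGT_0.
  destruct (mod2pi_spec (a - b)) as [k [Hk Hm]].
  destruct (mod2pi_spec (b - a)) as [k' [Hk' Hm']].
  set (m := mod2pi (a - b)) in *. set (m' := mod2pi (b - a)) in *.
  assert (Hs : m + m' = 2 * PI * IZR (- (k + k'))) by (rewrite opp_IZR, plus_IZR; lra).
  assert (Hz0 : 0 <= IZR (- (k + k'))) by nra.
  assert (Hz1 : IZR (- (k + k')) < 2) by nra.
  apply le_IZR in Hz0. apply lt_IZR in Hz1.
  assert (Hsum : m + m' <= 2 * PI).
  { rewrite Hs. assert (H01 : (- (k + k') = 0 \/ - (k + k') = 1)%Z) by lia.
    destruct H01 as [E|E]; rewrite E; simpl; lra. }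
  assert (Hcm : cos m = cos (a - b)) by (rewrite Hk; apply cos_perZ).
  assert (Hcm' : cos m' = cos (a - b)).
  { rewrite Hk', cos_perZ. replace (b - a) with (- (a - b)) by ring. apply cos_neg. }
  unfold Rmin. destruct (Rle_dec m m').
  - destruct (Rle_dec m B) as [|Hn]; [assumption|].
    exfalso. assert (cos m < cos B) by (apply cos_decreasing_1; lra). lra.
  - destruct (Rle_dec m' B) as [|Hn]; [assumption|].
    exfalso. assert (cos m' < cos B) by (apply cos_decreasing_1; lra). lra.
Qed.

Lemma key (x y x0 y0 alpha c s c0 s0 r0 : R)
  (hxy : x ^ 2 + y ^ 2 = 1)
  (ha0 : 0 < alpha) (ha1 : alpha <= 1 / 2)
  (hx : Rabs (c - r0 * c0) <= alpha) (hy : Rabs (s - r0 * s0) <= alpha)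
  (hcs : c ^ 2 + s ^ 2 = 1) (hcs0 : c0 ^ 2 + s0 ^ 2 = 1)
  (hr0 : 0 < r0) (ex : x = c) (ey : y = s) (ex0 : x0 = r0 * c0) (ey0 : y0 = r0 * s0) :
  1 - 2 * alpha ^ 2 <= c * c0 + s * s0.
Proof.
  subst x y x0 y0.
  set (e1 := r0 * c0 - c). set (e2 := r0 * s0 - s).
  assert (H1 : e1 ^ 2 <= alpha ^ 2).
  { unfold e1. rewrite <- Rabs_Ropp in hx. replace (- (c - r0 * c0)) with (r0 * c0 - c) in hx by ring.
    pose proof (Rabs_pos (r0 * c0 - c)). rewrite <- (pow2_abs (r0 * c0 - c)). nra. }
  assert (H2 : e2 ^ 2 <= alpha ^ 2).
  { unfold e2. rewrite <- Rabs_Ropp in hy. replace (- (s - r0 * s0)) with (r0 * s0 - s) in hy by ring.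
    pose proof (Rabs_pos (r0 * s0 - s)). rewrite <- (pow2_abs (r0 * s0 - s)). nra. }
  set (E := e1 ^ 2 + e2 ^ 2). set (sg := c * e1 + s * e2).
  assert (HE : E <= 2 * alpha ^ 2) by (unfold E; lra).
  assert (HsE : sg ^ 2 <= E).
  { pose proof (pow2_ge_0 (c * e2 - s * e1)).
    assert (E * (c ^ 2 + s ^ 2) - sg ^ 2 = (c * e2 - s * e1) ^ 2) by (unfold E, sg; ring).
    rewrite hxy in *. lra. }
  assert (Ha2 : alpha ^ 2 <= 1/4) by nra.
  assert (Hs1 : 0 < 1 + sg) by nra.
  set (C := c * c0 + s * s0).
  assert (HrC : r0 * C = 1 + sg).
  { assert (r0 * C - (1 + sg) = (c^2+s^2) - 1) by (unfold C, sg, e1, e2; ring). lra. }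
  assert (Hr2 : r0 ^ 2 = 1 + 2 * sg + E).
  { unfold E, sg, e1, e2. nra. }
  assert (HC0 : 0 < C) by nra.
  assert (Hid : (1 + sg) ^ 2 - (1 - E) * (1 + 2 * sg + E) = (sg + E) ^ 2) by ring.
  assert (HC2 : r0 ^ 2 * (C ^ 2 - (1 - E)) >= 0).
  { replace (r0 ^ 2 * (C ^ 2 - (1 - E))) with ((r0 * C) ^ 2 - (1 - E) * r0 ^ 2) by ring.
    rewrite HrC, Hr2, Hid. apply Rle_ge, pow2_ge_0. }
  assert (HC3 : C ^ 2 >= 1 - E).
  { assert (0 < r0 ^ 2) by nra.
    destruct (Rlt_dec (C ^ 2) (1 - E)); [|lra]. nra. }
  fold C. nra.
Qed.

Theorem theorem5p1 (x y x0 y0 alpha : R)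
  (hxy : x ^ 2 + y ^ 2 = 1)
  (ha0 : 0 < alpha) (ha1 : alpha <= 1 / 2)
  (hx : Rabs (x - x0) <= alpha) (hy : Rabs (y - y0) <= alpha) :
  forall t t0 : R, is_polar_angle x y t -> is_polar_angle x0 y0 t0 ->
    dist2pi t t0 <= asin alpha + asin (alpha / (1 - alpha)).
Proof.
  intros t t0 [r [hr [ex ey]]] [r0 [hr0 [ex0 ey0]]].
  pose proof (sin2_cos2 t) as P1. pose proof (sin2_cos2 t0) as P2.
  unfold Rsqr in P1, P2.
  assert (Hr : r = 1).
  { assert (r ^ 2 = 1).
    { rewrite <- hxy, ex, ey. replace (r^2) with (r^2 * 1) by ring. rewrite <- P1. ring. }
    nra. }
  subst r.
  assert (Hk : 1 - 2 * alpha ^ 2 <= cos t * cos t0 + sin t * sin t0).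
  { apply (key x y x0 y0 alpha (cos t) (sin t) (cos t0) (sin t0) r0); auto; try lra.
    - replace (cos t) with x by lra. rewrite <- ex0. exact hx.
    - replace (sin t) with y by lra. rewrite <- ey0. exact hy. }
  rewrite <- cos_minus in Hk.
  pose proof PI_RGT_0 as Hpi.
  set (beta := alpha / (1 - alpha)).
  assert (Hb1 : beta <= 1) by (unfold beta; apply Rmult_le_reg_r with (1 - alpha); [lra|]; field_simplify; lra).
  assert (Hb0 : alpha <= beta) by (unfold beta; apply Rmult_le_reg_r with (1 - alpha); [lra|]; field_simplify; nra).
  pose proof (asin_bound alpha). pose proof (asin_bound beta).
  assert (Hsa : sin (asin alpha) = alpha) by (apply sin_asin; lra).
  assert (Hsb : sin (asin beta) = beta) by (apply sin_asin; lra).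
  assert (A0 : 0 <= asin alpha).
  { apply sin_incr_0; try lra. rewrite sin_0, Hsa. lra. }
  assert (A1 : asin alpha <= asin beta).
  { apply sin_incr_0; try lra. }
  apply Rle_trans with (2 * asin alpha); [|lra].
  apply dist_le; [lra|].
  rewrite cos_2a_sin, Hsa. lra.
Qed.
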